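(* Let $M$ be a Peano continuum. Every cut pair of $M$ is contained in a unique cyclic element of $M$.
   Context: A Peano continuum is a compact, connected, locally connected metrizable space. A (global) cut point of $M$ is $\eta\in M$ with $M\setminus\{\eta\}$ disconnected. A cyclic element is a subset $C\subseteq M$ that either consists of a single cut point, or contains a non-cut point $p$ together with all points $q$ not separated from $p$ by any cut point of $M$. A cut pair is a set of two distinct points $\{\zeta,\xi\}$ such that $M\setminus\{\zeta,\xi\}$ is disconnected but neither $\zeta$ nor $\xi$ is a cut point of $M$. *)

(* Defs.v *)
From HB Require Import structures.
From mathcomp Require Import all_boot all_order all_algebra.
From mathcomp Require Import all_classical all_reals all_analysis.
Set Implicit Arguments. Unset Strict Implicit. Unset Printing Implicit Defensive.
Local Open Scope classical_set_scope.

Section Peano.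
Context {T : topologicalType}.

Definition locally_connected_space : Prop :=
  forall (x : T) (U : set T), nbhs x U ->
    exists V : set T, [/\ open V, V x, connected V & V `<=` U].

(* M = the whole space T *)
Definition cut_point (eta : T) : Prop := ~ connected (~` [set eta]).

Definition separates (c p q : T) : Prop :=
  exists A B : set T, [/\ ~` [set c] = A `|` B, separated A B, A p & B q].

Definition cyclic_element (C : set T) : Prop :=
  (exists eta, cut_point eta /\ C = [set eta]) \/
  (exists p, ~ cut_point p /\ C p /\
     C = [set q | forall c, cut_point c -> ~ separates c p q]).

Definition cut_pair (zeta xi : T) : Prop :=
  [/\ zeta <> xi, ~ connected (~` [set zeta; xi]), ~ cut_point zeta
    & ~ cut_point xi].

End Peano.

(* A Peano continuum: a compact, connected, locally connected metric space.
   Metrizability: T carries a pseudometric inducing its topology, and is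
   Hausdorff (so the pseudometric is a metric). *)
Definition peano_continuum {R : realType} (T : pseudoMetricType R) : Prop :=
  [/\ hausdorff_space T, compact [set: T], connected [set: T]
    & locally_connected_space (T := T)].

(* Main.v *)
Require Import Defs.
From mathcomp Require Import all_boot all_order all_algebra.
From mathcomp Require Import all_classical all_reals all_analysis.
Local Open Scope classical_set_scope.

Section Aux.
Context {T : topologicalType}.

Lemma I0F {A B : set T} {x} : A `&` B = set0 -> A x -> B x -> False.
Proof. by move=> H a b; have : (A `&` B) x by []; rewrite H. Qed.

Lemma sep_sub (X Y Q P A B : set T) :
  X `<=` Q `&` A -> Y `<=` P `|` B -> separated Q P -> separated A B ->
  separated X Y.
Proof.
move=> XQA YPB [QP1 QP2] [AB1 AB2]; split; apply/seteqP; split => // x [].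
- move=> cX Yx.
  have cQ : closure Q x by apply: (closureS _ cX) => y /XQA [].
  have cA : closure A x by apply: (closureS _ cX) => y /XQA [].
  case: (YPB _ Yx) => h; [elim: (I0F QP1 cQ h)|elim: (I0F AB1 cA h)].
- move=> Xx cY; case: (XQA _ Xx) => Qx Ax.
  have : closure (P `|` B) x by exact: (closureS YPB cY).
  rewrite closureU => -[h|h]; [elim: (I0F QP2 Qx h)|elim: (I0F AB2 Ax h)].
Qed.

Lemma sep_sym (c p q : T) : separates c p q -> separates c q p.
Proof.
move=> [A [B [hU hs Ap Bq]]]; exists B, A; split => //.
  by rewrite setUC.
by rewrite separatedC.
Qed.

Definition Cof (p : T) := [set q | forall c, cut_point c -> ~ separates c p q].

Lemma Cof_sub (p z : T) : ~ cut_point p -> Cof p z -> Cof p `<=` Cof z.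
Proof.
move=> np Cpz q Cpq c cc [A [B [hU hs Az Bq]]].
have : (~` [set c]) p by move=> /= pc; apply: np; rewrite pc.
rewrite hU => -[Ap|Bp].
- by apply: (Cpq c cc); exists A, B.
- by apply: (Cpz c cc); apply: sep_sym; exists A, B.
Qed.

Lemma key (zeta xi c q0 : T) (A B P Q : set T) :
  ~` [set c] = A `|` B -> separated A B -> A zeta -> B xi ->
  ~` [set zeta; xi] = P `|` Q -> separated P Q -> P c -> Q q0 -> A q0 ->
  cut_point zeta.
Proof.
move=> hU hAB Az Bx hPQ sPQ Pc Qq Aq.
have Qsub : Q `<=` ~` [set zeta; xi] by rewrite hPQ => y h; right.
apply/connectedPn.
pose rest := ~` [set zeta] `\` (Q `&` A).
exists (fun b => if b then rest else Q `&` A); split.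
- case.
  + exists xi; split.
    * by move=> /= h; apply: (I0F (separated_disjoint hAB) Az); rewrite -h.
    * by move=> [Qxi _]; apply: (Qsub _ Qxi); right.
  + by exists q0.
- apply/seteqP; split => x /=.
  + move=> nz; have [h|h] := pselect ((Q `&` A) x); [by left|by right].
  + case.
    * by move=> [Qx _] xz; apply: (Qsub _ Qx); left.
    * by move=> [].
- apply: (sep_sub _ _ Q P A B).
  + by [].
  + move=> x [xz nQA].
    have [->|xnc] := pselect (x = c); first by left.
    have : (~` [set c]) x by [].
    rewrite hU => -[Ax|Bx']; last by right.
    have [-> | xnxi] := pselect (x = xi); first by right.
    have : (~` [set zeta; xi]) x by move=> /= [].
    rewrite hPQ => -[Px|Qx]; first by left.
    by exfalso; apply: nQA.
  + by rewrite separatedC.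
  + by [].
Qed.

End Aux.

Theorem lemma2p5 (R : realType) (T : pseudoMetricType R) :
  peano_continuum T ->
  forall zeta xi : T, cut_pair zeta xi ->
  exists C : set T, [/\ cyclic_element C, [set zeta; xi] `<=` C &
    forall C' : set T, cyclic_element C' -> [set zeta; xi] `<=` C' -> C' = C].
Proof.
move=> _ zeta xi [nzx ndis nz nx].
have Cxi : Cof zeta xi.
  move=> c cc [A [B [hU hAB Az Bx]]].
  have czeta : c <> zeta.
    move=> e; have h : (~` [set c]) zeta by rewrite hU; left.
    by apply: h; rewrite e.
  have cxi : c <> xi.
    move=> e; have h : (~` [set c]) xi by rewrite hU; right.
    by apply: h; rewrite e.
  move/connectedPn: ndis => [E [E0 EU Esep]].
  have : (~` [set zeta; xi]) c.
    by move=> /= [e|e]; [apply: czeta|apply: cxi].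
  rewrite EU => hc.
  have [P [Q [hPQ sPQ Pc Q0]]] : exists P Q, [/\ ~` [set zeta; xi] = P `|` Q,
      separated P Q, P c & Q !=set0].
    case: hc => h.
    + by exists (E false), (E true); split.
    + exists (E true), (E false); split => //.
      * by rewrite EU setUC.
      * by rewrite separatedC.
  case: Q0 => q0 Qq.
  have : (~` [set zeta; xi]) q0 by rewrite hPQ; right.
  have q0c : q0 <> c.
    by move=> e; apply: (I0F (separated_disjoint sPQ) Pc); rewrite -e.
  have : (~` [set c]) q0 by [].
  rewrite hU => -[Aq|Bq] _.
  + by apply: nz; apply: (key zeta xi c q0 A B P Q hU hAB Az Bx hPQ sPQ Pc Qq Aq).
  + apply: nx; apply: (key xi zeta c q0 B A P Q).
    * by rewrite setUC.
    * by rewrite separatedC.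
    * exact: Bx.
    * exact: Az.
    * by rewrite -hPQ; congr (~` _); rewrite setUC.
    * exact: sPQ.
    * exact: Pc.
    * exact: Qq.
    * exact: Bq.
have Cz : Cof zeta zeta.
  move=> c _ [A [B [_ hAB Az Bz]]].
  exact: (I0F (separated_disjoint hAB) Az Bz).
exists (Cof zeta); split.
- by right; exists zeta; split.
- by move=> x [->|->].
- move=> C' [[eta [_ ->]]|[p [np [C'p ->]]]] sub.
  + exfalso; apply: nzx.
    by rewrite (sub zeta (or_introl erefl)) (sub xi (or_intror erefl)).
  + have Cpz : Cof p zeta by apply: sub; left.
    have Czp : Cof zeta p by move=> c cc /sep_sym; exact: Cpz c cc.
    apply/seteqP; split.
    * exact: (Cof_sub p zeta np Cpz).
    * exact: (Cof_sub zeta p nz Czp).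
Qed.
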